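(* Let $\mathcal{X} \subseteq \mathbb{R}^m$ be countable with ground metric $d$, and let $\widehat\nu = \sum_{j=1}^N \widehat\nu_j \delta_{\widehat x_j}$ be a probability mass function supported on $N$ distinct points $\widehat x_1,\dots,\widehat x_N \in \mathcal{X}$ with $\widehat\nu_j > 0$ and $\sum_j \widehat\nu_j = 1$. For $\varepsilon \ge 0$ let $\mathbb{B}_{\mathbb{W}}(\widehat\nu,\varepsilon) = \{\nu \in \mathcal{M}(\mathcal{X}) : \mathbb{W}(\nu,\widehat\nu) \le \varepsilon\}$. Then for any $\varepsilon \ge 0$ and $x \in \mathcal{X}$ there exists $\nu^\star_{\mathbb{W}} \in \mathbb{B}_{\mathbb{W}}(\widehat\nu,\varepsilon)$ with $$\sup_{\nu \in \mathbb{B}_{\mathbb{W}}(\widehat\nu,\varepsilon)} \nu(x) = \nu^\star_{\mathbb{W}}(x).$$ Furthermore, $\nu^\star_{\mathbb{W}}$ is supported on at most $N+1$ points and satisfies $\mathrm{supp}(\nu^\star_{\mathbb{W}}) \subseteq \mathrm{supp}(\widehat\nu) \cup \{x\}$.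
   Context: $\mathcal{M}(\mathcal{X})$ is the set of probability mass functions supported on $\mathcal{X}$. The type-1 Wasserstein distance between $\nu_1,\nu_2 \in \mathcal{M}(\mathcal{X})$ is $\mathbb{W}(\nu_1,\nu_2) = \inf_{\lambda \in \Lambda(\nu_1,\nu_2)} \mathbb{E}_\lambda[d(x_1,x_2)]$, where $\Lambda(\nu_1,\nu_2)$ is the set of distributions on $\mathcal{X}\times\mathcal{X}$ with marginals $\nu_1$ and $\nu_2$, and $d$ is the ground metric on $\mathcal{X}$. *)

(* Defs.v *)
From HB Require Import structures.
From mathcomp Require Import all_boot all_order all_algebra.
From mathcomp Require Import all_classical all_reals all_analysis.
Set Implicit Arguments. Unset Strict Implicit. Unset Printing Implicit Defensive.
Import Order.TTheory GRing.Theory Num.Theory.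
Local Open Scope classical_set_scope.
Local Open Scope ring_scope.

Section Wasserstein.
Variables (R : realType) (m : nat).
Local Notation pt := 'rV[R]_m.

Definition metric_on (X : set pt) (d : pt -> pt -> R) : Prop :=
  (forall x y, X x -> X y -> 0 <= d x y) /\
  (forall x y, X x -> X y -> (d x y = 0 <-> x = y)) /\
  (forall x y, X x -> X y -> d x y = d y x) /\
  (forall x y z, X x -> X y -> X z -> d x z <= d x y + d y z).

Definition pmf_on (X : set pt) (nu : pt -> R) : Prop :=
  (forall y, 0 <= nu y) /\ (forall y, ~ X y -> nu y = 0) /\
  (\esum_(y in X) (nu y)%:E = 1%E).

Definition coupling (X : set pt) (nu1 nu2 : pt -> R) (lam : pt * pt -> R) : Prop :=
  (forall p, 0 <= lam p) /\ (forall p, ~ (X `*` X) p -> lam p = 0) /\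
  (forall x1, X x1 -> \esum_(x2 in X) (lam (x1, x2))%:E = (nu1 x1)%:E) /\
  (forall x2, X x2 -> \esum_(x1 in X) (lam (x1, x2))%:E = (nu2 x2)%:E).

Definition expect_cost (X : set pt) (d : pt -> pt -> R) (lam : pt * pt -> R) : \bar R :=
  \esum_(p in X `*` X) (lam p * d p.1 p.2)%:E.

Definition wass (X : set pt) (d : pt -> pt -> R) (nu1 nu2 : pt -> R) : \bar R :=
  ereal_inf [set expect_cost X d lam | lam in coupling X nu1 nu2].

Definition wball (X : set pt) (d : pt -> pt -> R) (nuh : pt -> R) (eps : R)
  : set (pt -> R) :=
  [set nu | pmf_on X nu /\ (wass X d nu nuh <= eps%:E)%E].

Definition discrete_pmf (N : nat) (w : 'I_N -> R) (xh : 'I_N -> pt) : pt -> R :=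
  fun y => \sum_(j < N) w j * (xh j == y)%:R.

Definition supp (nu : pt -> R) : set pt := [set y | nu y != 0].

End Wasserstein.

(* Main.v *)
Require Import Defs.
From HB Require Import structures.
From mathcomp Require Import all_boot all_order all_algebra.
From mathcomp Require Import all_classical all_reals all_analysis.
From mathcomp Require Import lra ring.
Import Order.TTheory GRing.Theory Num.Theory.
Local Open Scope classical_set_scope.
Local Open Scope ring_scope.
Section KKT.
Variable R : realType.

Lemma ex_maxR (I : finType) (P : pred I) (F : I -> R) i0 : P i0 ->
  exists2 i, P i & forall j, P j -> F j <= F i.
Proof.
move=> Pi0; case: (@Order.TotalTheory.arg_maxP _ _ _ i0 P F Pi0) => i Pi H.
by exists i.
Qed.

Lemma ex_minR (I : finType) (P : pred I) (F : I -> R) i0 : P i0 ->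
  exists2 i, P i & forall j, P j -> F i <= F j.
Proof.
move=> Pi0; case: (@Order.TotalTheory.arg_minP _ _ _ i0 P F Pi0) => i Pi H.
by exists i.
Qed.

Lemma kkt (N : nat) (w c : 'I_N -> R) (eps : R) :
  (forall j, 0 <= w j) -> (forall j, 0 <= c j) -> 0 <= eps ->
  exists t : 'I_N -> R, exists lam : R,
   (forall j, 0 <= t j <= w j) /\
       \sum_(j < N) t j * c j <= eps /\
       0 <= lam /\
       (forall j, lam * c j < 1 -> t j = w j) /\
       (forall j, 1 < lam * c j -> t j = 0) /\
       lam * (eps - \sum_(j < N) t j * c j) = 0.
Proof.
move=> w0 c0 e0.
case: (leP (\sum_(j < N) w j * c j) eps) => hs.
  exists w, 0; split; [|split; [|split; [|split; [|split]]]] => //.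
  - by move=> j; rewrite w0 lexx.
  - by move=> j; rewrite mul0r ltr10.
  - by rewrite mul0r.
have [k0 ck0] : exists k, 0 < c k.
  case: (pselect (exists k, 0 < c k)) => // nk; exfalso.
  have : \sum_(j < N) w j * c j = 0.
    apply: big1 => j _.
    have -> : c j = 0; last by rewrite mulr0.
    apply/eqP; rewrite eq_le c0 andbT leNgt; apply/negP => h; apply: nk; by exists j.
  move=> h; rewrite h in hs; lra.
have [k1 ck1 k1min] := @ex_minR _ (fun k => 0 < c k) c k0 ck0.
pose Q := fun k => (0 < c k) && (\sum_(j < N | c j < c k) w j * c j <= eps).
have Qk1 : Q k1.
  rewrite /Q ck1 /=; rewrite big1 // => j hj.
  have -> : c j = 0; last by rewrite mulr0.
  apply/eqP; rewrite eq_le c0 andbT leNgt; apply/negP => h.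
  by have := k1min j h; rewrite leNgt hj.
have [ks /andP[rpos Gle] ksmax] := @ex_maxR _ Q c k1 Qk1.
set r := c ks in rpos Gle ksmax.
set G := \sum_(j < N | c j < r) w j * c j in Gle.
pose E := \sum_(j < N | c j == r) w j * c j.
have E0 : 0 <= E by apply: sumr_ge0 => j _; rewrite mulr_ge0.
have HeqGE : \sum_(j < N | c j <= r) w j * c j = G + E.
  rewrite /G /E !(big_mkcond (fun j => _ <= r)) !(big_mkcond (fun j => _ < r)) !(big_mkcond (fun j => _ == r)).
  rewrite -big_split /=; apply: eq_bigr => j _.
  by case: ltgtP; rewrite ?addr0 ?add0r.
have epsH : eps <= G + E.
  rewrite -HeqGE leNgt; apply/negP => Hlt.
  have [j0 hj0] : exists j, r < c j.
    case: (pselect (exists j, r < c j)) => // nj; exfalso.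
    have : \sum_(j < N | c j <= r) w j * c j = \sum_(j < N) w j * c j.
      apply: eq_bigl => j; rewrite leNgt; apply/negP => h; apply: nj; by exists j.
    move=> h; rewrite h in Hlt; lra.
  have [l hl lmin] := @ex_minR _ (fun j => r < c j) c j0 hj0.
  have Ql : Q l.
    rewrite /Q (lt_trans rpos hl) /=.
    have -> : \sum_(j < N | c j < c l) w j * c j = \sum_(j < N | c j <= r) w j * c j.
      apply: eq_bigl => j.
      case: (leP (c j) r) => h.
        exact: (le_lt_trans h hl).
      by apply/negP => h2; have := lmin j h; rewrite leNgt h2.
    exact: ltW.
  by have := ksmax l Ql; rewrite leNgt hl.
pose al := (eps - G) / E.
have al0 : 0 <= al by rewrite /al divr_ge0 // subr_ge0.
have al1 : al <= 1.
  rewrite /al; have [->|En0] := eqVneq E 0; first by rewrite invr0 mulr0 ler01.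
  rewrite ler_pdivrMr ?mul1r; last by rewrite lt_def En0 E0.
  lra.
have alE : G + al * E = eps.
  rewrite /al; have [E00|En0] := eqVneq E 0.
    rewrite E00 mulr0 addr0; rewrite E00 in epsH; lra.
  rewrite mulfVK //; lra.
pose t := fun j => if c j < r then w j else if c j == r then al * w j else 0.
exists t, r^-1.
have sumt : \sum_(j < N) t j * c j = eps.
  rewrite -alE /G /E mulr_sumr big_mkcond [in RHS]big_mkcond /=.
  rewrite [X in _ = _ + X]big_mkcond -big_split /=; apply: eq_bigr => j _.
  rewrite /t; case: ltgtP; rewrite ?mul0r ?addr0 ?add0r ?mulrA //.
have lamc j : (r^-1 * c j < 1) = (c j < r).
  by rewrite ltr_pdivrMl // mulr1.
have lamc' j : (1 < r^-1 * c j) = (r < c j).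
  by rewrite ltr_pdivlMl // mulr1.
split; [|split; [|split; [|split; [|split]]]].
- move=> j; rewrite /t; case: ltgtP => _; rewrite ?lexx ?w0 //.
  by rewrite mulr_ge0 // ler_piMl.
- by rewrite sumt.
- by rewrite invr_ge0 ltW.
- by move=> j; rewrite lamc /t => ->.
- move=> j; rewrite lamc' /t => h; case: ltgtP h => //.
- by rewrite sumt subrr mulr0.
Qed.

Lemma kkt_bound (N : nat) (w c t s : 'I_N -> R) (eps lam e' : R) :
  (forall j, 0 <= t j <= w j) -> 0 <= lam ->
  (forall j, lam * c j < 1 -> t j = w j) ->
  (forall j, 1 < lam * c j -> t j = 0) ->
  lam * (eps - \sum_(j < N) t j * c j) = 0 ->
  (forall j, 0 <= s j <= w j) -> \sum_(j < N) s j * c j <= e' ->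
  \sum_(j < N) s j <= \sum_(j < N) t j + lam * (e' - eps).
Proof.
move=> tw l0 h1 h2 hc sw hs.
have key : \sum_(j < N) s j * (1 - lam * c j) <= \sum_(j < N) t j * (1 - lam * c j).
  apply: ler_sum => j _.
  case: (ltgtP (lam * c j) 1) => h.
  - rewrite (h1 j h); apply: ler_wpM2r; first by rewrite subr_ge0 ltW.
    by case/andP: (sw j).
  - rewrite (h2 j h) mul0r; apply: mulr_ge0_le0; first by case/andP: (sw j).
    by rewrite subr_le0 ltW.
  - by rewrite h subrr !mulr0.
have ex (u : 'I_N -> R) : \sum_(j < N) u j * (1 - lam * c j) = \sum_(j < N) u j - lam * \sum_(j < N) u j * c j.
  rewrite mulr_sumr -sumrB; apply: eq_bigr => j _.
  by rewrite mulrBr mulr1 mulrCA mulrA.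
rewrite !ex in key.
have hl : lam * \sum_(j < N) s j * c j <= lam * e' by apply: ler_wpM2l.
move: hc; rewrite mulrBr => hc.
rewrite mulrBr.
lra.
Qed.

End KKT.
Section Esum.
Context {R : realType} {T : choiceType}.

Lemma esum_pt (A : set T) (a : T) (g : R) : A a -> 0 <= g ->
  \esum_(y in A) (g * (a == y)%:R)%:E = g%:E.
Proof.
move=> Aa g0.
rewrite (esumID [set a]); last by move=> y _; rewrite lee_fin mulr_ge0.
have -> : A `&` [set a] = [set a].
  by apply/seteqP; split=> y /=; [case | move=> ->].
rewrite esum_set1 ?lee_fin ?eqxx ?mulr1 //.
rewrite esum1 ?adde0 // => y [_ /= ya].
have -> : (a == y) = false by apply/negbTE/eqP => ay; apply: ya; rewrite ay.
by rewrite mulr0.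
Qed.

Lemma esum_pts (A : set T) n (a : 'I_n -> T) (g : 'I_n -> R) :
  (forall j, A (a j)) -> (forall j, 0 <= g j) ->
  \esum_(y in A) (\sum_(j < n) g j * (a j == y)%:R)%:E = (\sum_(j < n) g j)%:E.
Proof.
move=> Aa g0.
transitivity (\esum_(y in A) \sum_(j < n) (g j * (a j == y)%:R)%:E).
  by apply: eq_esum => y _; rewrite sumEFin.
rewrite esum_sum; last by move=> y j _ _; rewrite lee_fin mulr_ge0.
rewrite -sumEFin; apply: eq_bigr => j _; exact: esum_pt.
Qed.



Lemma le_esum_pt (A : set T) (f : T -> R) a : (forall y, A y -> 0 <= f y) -> A a ->
  ((f a)%:E <= \esum_(y in A) (f y)%:E)%E.
Proof.
move=> f0 Aa.
rewrite -(@esum_pt A a (f a) Aa (f0 a Aa)).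
apply: le_esum => y Ay; rewrite lee_fin.
by case: eqP => [<-|_]; rewrite ?mulr1 ?mulr0 ?f0.
Qed.

End Esum.

Section Sums.
Context {R : realType} {T : eqType}.

Lemma sum_ind_inj N (a : 'I_N -> T) (g : 'I_N -> R) k : injective a ->
  \sum_(j < N) g j * (a j == a k)%:R = g k.
Proof.
move=> ia; rewrite (bigD1 k) //= eqxx mulr1 big1 ?addr0 // => i ik.
by rewrite (inj_eq ia) (negbTE ik) mulr0.
Qed.

Lemma sum_ind_out N (a : 'I_N -> T) (g : 'I_N -> R) y : (forall j, a j <> y) ->
  \sum_(j < N) g j * (a j == y)%:R = 0.
Proof.
move=> h; apply: big1 => j _.
by case: eqP => [/h//|_]; rewrite mulr0.
Qed.

End Sums.
Theorem mainTheorem4 (R : realType) (m : nat) (X : set 'rV[R]_m)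
  (d : 'rV[R]_m -> 'rV[R]_m -> R) (N : nat) (w : 'I_N -> R)
  (xh : 'I_N -> 'rV[R]_m) :
  countable X ->
  metric_on X d ->
  injective xh ->
  (forall j, X (xh j)) ->
  (forall j, 0 < w j) ->
  \sum_(j < N) w j = 1 ->
  forall (eps : R) (x : 'rV[R]_m), 0 <= eps -> X x ->
  exists nustar : 'rV[R]_m -> R,
    wball X d (discrete_pmf w xh) eps nustar /\
    sup [set nu x | nu in wball X d (discrete_pmf w xh) eps] = nustar x /\
    (exists s : seq 'rV[R]_m, (size s <= N.+1)%N /\ supp nustar `<=` [set` s]) /\
    supp nustar `<=` supp (discrete_pmf w xh) `|` [set x].
Proof.
move=> _ [dpos [dzero [dsym dtri]]] ixh Xxh w0 w1 eps x e0 Xx.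
set nuh := discrete_pmf w xh.
pose c j := d x (xh j).
have c0 j : 0 <= c j by apply: dpos.
have w0' j : 0 <= w j by apply: ltW.
have [t [lam [tw [tc [l0 [h1 [h2 hcs]]]]]]] := @kkt R N w c eps w0' c0 e0.
pose nus := fun y => \sum_(j < N) (w j - t j) * (xh j == y)%:R
                     + (\sum_(j < N) t j) * (x == y)%:R.
have nuh_xh j : nuh (xh j) = w j by apply: sum_ind_inj.
have wt j : 0 <= w j - t j by case/andP: (tw j) => _ ?; rewrite subr_ge0.
have t0 j : 0 <= t j by case/andP: (tw j).
have st0 : 0 <= \sum_(j < N) t j by apply: sumr_ge0.
have dxx y : X y -> d y y = 0 by move=> Xy; apply/(dzero y y Xy Xy).
have nus_pmf : pmf_on X nus.
  split; [|split].
  - move=> y; rewrite /nus addr_ge0 ?mulr_ge0 //.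
    by apply: sumr_ge0 => j _; rewrite mulr_ge0.
  - move=> y Xy; rewrite /nus sum_ind_out; last first.
      by move=> j hj; apply: Xy; rewrite -hj.
    have -> : (x == y) = false by apply/negbTE/eqP => h; apply: Xy; rewrite -h.
    by rewrite mulr0 addr0.
  - rewrite /nus.
    transitivity (\esum_(y in X) ((\sum_(j < N) (w j - t j) * (xh j == y)%:R)%:E
                   + ((\sum_(j < N) t j) * (x == y)%:R)%:E)).
      by apply: eq_esum => y _; rewrite EFinD.
    rewrite esumD; last 2 first.
    + by move=> y _; rewrite lee_fin; apply: sumr_ge0 => j _; rewrite mulr_ge0.
    + by move=> y _; rewrite lee_fin mulr_ge0.
    by rewrite esum_pts // esum_pt // -EFinD sumrB subrK w1.
pose lamc := fun p : 'rV[R]_m * 'rV[R]_m => \sum_(j < N)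
   ((w j - t j) * (xh j == p.1)%:R + t j * (x == p.1)%:R) * (xh j == p.2)%:R.
have lamc_coup : coupling X nus nuh lamc.
  split; [|split; [|split]].
  - move=> p; apply: sumr_ge0 => j _; rewrite mulr_ge0 // addr_ge0 // mulr_ge0 //.
  - move=> [p1 p2] /= hp; rewrite /lamc /=; apply: big1 => j _.
    case: (eqVneq (xh j) p2) => [e2|n2]; last by rewrite mulr0.
    have np1 : ~ X p1 by move=> h1'; apply: hp; split => //; rewrite -e2.
    have -> : (xh j == p1) = false by apply/negbTE/eqP=> e; apply: np1; rewrite -e.
    have -> : (x == p1) = false by apply/negbTE/eqP=> e; apply: np1; rewrite -e.
    by rewrite !mulr0 addr0 mul0r.
  - move=> x1 X1; rewrite /lamc /= esum_pts //; last first.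
      by move=> j; rewrite addr_ge0 // mulr_ge0.
    by congr EFin; rewrite /nus big_split /= -mulr_suml.
  - move=> x2 X2.
    transitivity (\esum_(x1 in X) ((\sum_(j < N) ((w j - t j) * (xh j == x2)%:R) * (xh j == x1)%:R)%:E
       + ((\sum_(j < N) t j * (xh j == x2)%:R) * (x == x1)%:R)%:E)).
      apply: eq_esum => x1 _; rewrite -EFinD; congr EFin.
      rewrite /lamc /= mulr_suml -big_split /=; apply: eq_bigr => j _; ring.
    rewrite esumD; last 2 first.
    + by move=> y _; rewrite lee_fin; apply: sumr_ge0 => j _; rewrite !mulr_ge0.
    + by move=> y _; rewrite lee_fin mulr_ge0 //; apply: sumr_ge0 => j _; rewrite mulr_ge0.
    rewrite esum_pts //; last by move=> j; rewrite mulr_ge0.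
    rewrite esum_pt //; last by apply: sumr_ge0 => j _; rewrite mulr_ge0.
    rewrite -EFinD; congr EFin.
    rewrite /nuh /discrete_pmf -big_split /=; apply: eq_bigr => j _; ring.
have cost : expect_cost X d lamc = (\sum_(j < N) t j * c j)%:E.
  rewrite /expect_cost.
  transitivity (\esum_(p in X `*` X) (\sum_(j < N) (t j * c j) * ((x, xh j) == p)%:R)%:E).
    apply: eq_esum => -[p1 p2] [X1 X2] /=; congr EFin.
    rewrite /lamc /= mulr_suml; apply: eq_bigr => j _.
    rewrite xpair_eqE.
    case: (eqVneq (xh j) p2) => [<-|n2]; last by rewrite ?andbF ?mulr0 ?mul0r.
    case: (eqVneq x p1) => [<-|n1].
      rewrite ?eqxx /= ?mulr1.
      case: (eqVneq (xh j) x) => [e|n].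
        by rewrite /c e dxx // !mulr0.
      by rewrite ?mulr0 ?add0r.
    rewrite /= ?mulr0 ?addr0 ?mulr1.
    case: (eqVneq (xh j) p1) => [e|n].
      by rewrite e dxx // mulr0.
    by rewrite ?mulr0 ?mul0r.
  by rewrite esum_pts // => j; rewrite /= ?mulr_ge0 //; split.
have nus_ball : wball X d nuh eps nus.
  split => //.
  have : (wass X d nus nuh <= expect_cost X d lamc)%E.
    by apply: ereal_inf_lbound; exists lamc.
  by move/le_trans; apply; rewrite cost lee_fin.
have ub : forall nu, wball X d nuh eps nu -> nu x <= nus x.
  move=> nu [[nu0 [nuX nu1]] hw].
  have nusx : \sum_(j < N) t j <= nus x.
    by rewrite /nus eqxx mulr1 lerDr; apply: sumr_ge0 => j _; rewrite mulr_ge0.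
  apply/ler_addgt0Pr => del del0.
  have lp : 0 < lam + 1 by lra.
  pose eta := del / (lam + 1).
  have eta0 : 0 < eta by rewrite divr_gt0.
  have : (wass X d nu nuh < (eps + eta)%:E)%E.
    by apply: le_lt_trans hw _; rewrite lte_fin; lra.
  case/ereal_inf_lt => _ [lam0 [l0nn [l0X [l0m1 l0m2]]] <-] hcost.
  pose s j := lam0 (x, xh j).
  have lam0_out : forall x1 x2, X x1 -> X x2 -> (forall j, xh j <> x2) -> lam0 (x1, x2) = 0.
    move=> x1 x2 X1 X2 nj; apply/eqP; rewrite eq_le l0nn andbT.
    have : ((lam0 (x1, x2))%:E <= (nuh x2)%:E)%E.
      rewrite -(l0m2 x2 X2).
      exact: (@le_esum_pt _ _ X (fun y => lam0 (y, x2)) x1 (fun y _ => l0nn _) X1).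
    by rewrite lee_fin /nuh /discrete_pmf sum_ind_out.
  have s_le j : 0 <= s j <= w j.
    rewrite l0nn /= -lee_fin -(nuh_xh j) -(l0m2 _ (Xxh j)).
    exact: (@le_esum_pt _ _ X (fun y => lam0 (y, xh j)) x (fun y _ => l0nn _) Xx).
  have nux : nu x = \sum_(j < N) s j.
    have : (nu x)%:E = (\sum_(j < N) s j)%:E.
      rewrite -(l0m1 x Xx) -(@esum_pts _ _ X N xh s Xxh); last by move=> j; case/andP: (s_le j).
      apply: eq_esum => y Xy.
      case: (pselect (exists j, xh j = y)) => [[k <-]|nk].
        by rewrite sum_ind_inj.
      rewrite sum_ind_out; last by move=> j hj; apply: nk; exists j.
      have nj : forall j, xh j <> y by move=> j hj; apply: nk; exists j.
      by rewrite lam0_out.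
    by case.
  have sc : \sum_(j < N) s j * c j <= eps + eta.
    have : ((\sum_(j < N) s j * c j)%:E <= expect_cost X d lam0)%E.
      have sc0 j : 0 <= s j * c j by rewrite mulr_ge0 //; case/andP: (s_le j).
      rewrite -(@esum_pts _ _ (X `*` X) N (fun j => (x, xh j)) (fun j => s j * c j) (fun j => conj Xx (Xxh j)) sc0).
      apply: le_esum => -[p1 p2] [X1 X2]; rewrite lee_fin /=.
      case: (pselect (exists j, (x, xh j) = (p1, p2))) => [[k hk]|nk]; first case: hk => <- <-.
        rewrite sum_ind_inj //.
        by move=> i j [] /ixh.
      rewrite sum_ind_out; last by move=> j hj; apply: nk; exists j.
      by rewrite mulr_ge0 //; apply: dpos.
    move=> h; have := le_lt_trans h hcost; rewrite lte_fin; apply: ltW.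
  have := @kkt_bound R N w c t s eps lam (eps + eta) tw l0 h1 h2 hcs s_le sc.
  rewrite -nux.
  have : lam * (eps + eta - eps) <= del.
    rewrite addrAC subrr add0r /eta mulrA ler_pdivrMr //; nra.
  lra.
exists nus; split => //; split.
  apply/le_anti/andP; split.
    apply: ge_sup; first by exists (nus x), nus.
    by move=> _ [nu hnu <-]; exact: ub.
  apply: ub_le_sup; last by exists nus.
  by exists (nus x) => _ [nu hnu <-]; exact: ub.
split.
  exists (x :: [seq xh j | j <- enum 'I_N]); split.
    by rewrite /= size_map size_enum_ord.
  move=> y /= hy.
  case: (eqVneq x y) => [<-|nxy]; first by rewrite mem_head.
  case: (pselect (exists j, xh j = y)) => [[k <-]|nk].
    by rewrite in_cons map_f ?orbT // mem_enum.
  exfalso; move: hy; rewrite /supp /= /nus sum_ind_out; last first.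
    by move=> j hj; apply: nk; exists j.
  by rewrite (negbTE nxy) mulr0 addr0 eqxx.
move=> y hy; case: (eqVneq x y) => [<-|nxy]; [by right|left].
case: (pselect (exists j, xh j = y)) => [[k <-]|nk].
  by rewrite /supp /= nuh_xh; exact: lt0r_neq0 (w0 k).
exfalso; move: hy; rewrite /supp /= /nus sum_ind_out; last first.
  by move=> j hj; apply: nk; exists j.
by rewrite (negbTE nxy) mulr0 addr0 eqxx.
Qed.
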